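(* Let $P \subset \mathbb{R}^d$ be a finite point set and let $\mathcal{Q}:\mathbb{R}^d \to P$ be any map. Define the witness-based distance function $\widetilde{d}_{\mathcal{Q}}(x) = \|x - \mathcal{Q}(x)\|$. If there exists at least one point $x \in \mathbb{R}^d$ with $\widetilde{d}_{\mathcal{Q}}(x) \neq d_P(x)$, then $\widetilde{d}_{\mathcal{Q}}$ cannot simultaneously be continuous on $\mathbb{R}^d$ and satisfy a finite relative error bound, i.e. there is no pair of properties ''$\widetilde{d}_{\mathcal{Q}}$ is continuous'' and ''there is a constant $c>0$ with $|\widetilde{d}_{\mathcal{Q}}(y) - d_P(y)| \leq c\, d_P(y)$ for all $y \in \mathbb{R}^d$'' holding at the same time.
   Context: $\|\cdot\|$ is the Euclidean norm and $d_P(x) = \min_{p \in P} \|x - p\|$ is the distance from $x$ to $P$. A function of the form $\widetilde{d}_{\mathcal{Q}}(x) = \|x - \mathcal{Q}(x)\|$, where $\mathcal{Q}$ assigns to each query point a ''witness'' point of $P$, is called witness-based; note $\widetilde{d}_{\mathcal{Q}} \geq d_P$ always. The relative error of $\widetilde{d}_{\mathcal{Q}}$ at $y$ is $(\widetilde{d}_{\mathcal{Q}}(y)-d_P(y))/d_P(y)$. *)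

(* Defs.v *)
From HB Require Import structures.
From mathcomp Require Import all_boot all_order all_algebra.
From mathcomp Require Import all_classical all_reals all_analysis.
Set Implicit Arguments. Unset Strict Implicit. Unset Printing Implicit Defensive.
Import Order.TTheory GRing.Theory Num.Theory.
Import numFieldNormedType.Exports.
Local Open Scope ring_scope.

Definition enorm (R : realType) (d : nat) (x : 'rV[R]_d) : R :=
  Num.sqrt (\sum_(i < d) x ord0 i ^+ 2).

Definition distP (R : realType) (d : nat) (P : seq 'rV[R]_d) (x : 'rV[R]_d) : R :=
  \big[Num.min/enorm (x - head 0 P)]_(p <- P) enorm (x - p).

Definition wdist (R : realType) (d : nat) (Q : 'rV[R]_d -> 'rV[R]_d) (x : 'rV[R]_d) : R :=
  enorm (x - Q x).

(* Main.v *)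
Require Import Defs.
From HB Require Import structures.
From mathcomp Require Import all_boot all_order all_algebra.
From mathcomp Require Import ring lra.
From mathcomp Require Import all_classical all_reals all_analysis.
Import Order.TTheory GRing.Theory Num.Theory.
Import numFieldNormedType.Exports.
Local Open Scope ring_scope.

Section S.
Context {R : realType}.
Context {d : nat}.
Implicit Types (x y a b : 'rV[R]_d).

Definition sq x : R := \sum_(i < d) x ord0 i ^+ 2.
Definition dot a b : R := \sum_(i < d) a ord0 i * b ord0 i.

Lemma sq_ge0 x : 0 <= sq x.
Proof. by apply: sumr_ge0 => i _; rewrite sqr_ge0. Qed.

Lemma enorm_sq x : enorm x ^+ 2 = sq x.
Proof. by rewrite /enorm sqr_sqrtr // sq_ge0. Qed.

Lemma enorm_ge0 x : 0 <= enorm x.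
Proof. exact: sqrtr_ge0. Qed.

Lemma sq_lin (t : R) a b : sq (t *: a + b) = t ^+ 2 * sq a + 2 * t * dot a b + sq b.
Proof.
rewrite /sq /dot mulr_sumr mulr_sumr -!big_split /=; apply: eq_bigr => i _.
rewrite !mxE; ring.
Qed.

Lemma bigmin_cases (s : seq 'rV[R]_d) (F : 'rV[R]_d -> R) z :
  (forall p, p \in s -> \big[Num.min/z]_(p <- s) F p <= F p) /\
  (\big[Num.min/z]_(p <- s) F p = z \/ exists2 p, p \in s & \big[Num.min/z]_(p <- s) F p = F p).
Proof.
elim: s => [|q s [IH1 IH2]]; first by rewrite big_nil; split => //; left.
rewrite big_cons; split.
  move=> p; rewrite inE => /orP [/eqP -> | ps]; first by rewrite ge_min lexx.
  by rewrite ge_min (IH1 p ps) orbT.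
case: (leP (F q) (\big[Num.min/z]_(j <- s) F j)) => h.
  by right; exists q; rewrite ?inE ?eqxx.
case: IH2 => [->|[p ps ->]]; first by left.
by right; exists p => //; rewrite inE ps orbT.
Qed.

Lemma distP_le (P : seq 'rV[R]_d) x p : p \in P -> distP P x <= enorm (x - p).
Proof. by move=> pP; case: (bigmin_cases P (fun p => enorm (x - p)) (enorm (x - head 0 P))) => H _; apply: H. Qed.

Lemma distP_att (P : seq 'rV[R]_d) x q : q \in P -> exists2 p, p \in P & distP P x = enorm (x - p).
Proof.
move=> qP; case: (bigmin_cases P (fun p => enorm (x - p)) (enorm (x - head 0 P))) => _ [H|[p pP H]].
  by exists (head 0 P) => //; case: P qP {H} => //= a l _; rewrite inE eqxx.
by exists p.
Qed.

Lemma mu_ex (P : seq 'rV[R]_d) p : exists2 m : R, 0 < m & forall q, q \in P -> q != p -> m <= sq (p - q).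
Proof.
elim: P => [|a s [m m0 H]]; first by exists 1.
case: (eqVneq a p) => [->|ap].
  exists m => // q; rewrite inE => /orP[/eqP->|]; [by rewrite eqxx| exact: H].
have pos : 0 < sq (p - a).
  rewrite lt_neqAle sq_ge0 andbT eq_sym; apply/negP => /eqP h0.
  move/negP: ap; apply; apply/eqP/rowP => i.
  have := h0; rewrite /sq => /eqP; rewrite psumr_eq0 => [/allP/(_ i)|]; last by move=> *; rewrite sqr_ge0.
  rewrite mem_index_enum => /(_ isT) /=; rewrite sqrf_eq0 !mxE subr_eq0 => /eqP ->.
  by rewrite (ord1 ord0).
exists (Num.min m (sq (p - a))); first by rewrite lt_min m0.
move=> q; rewrite inE => /orP[/eqP->|qs qp]; first by rewrite ge_min lexx orbT.
by rewrite ge_min H.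
Qed.


Lemma sq_scale (t : R) a : sq (t *: a) = t ^+ 2 * sq a.
Proof.
have s0 : sq (0 : 'rV[R]_d) = 0 by rewrite /sq big1 // => i _; rewrite mxE expr0n.
have d0 : dot a 0 = 0 by rewrite /dot big1 // => i _; rewrite mxE mulr0.
rewrite -[t *: a]addr0 sq_lin s0 d0.
by rewrite mulr0 !addr0.
Qed.

End S.

Lemma cB (R : realType) (f g : R -> R) : continuous f -> continuous g -> continuous (fun x => f x - g x).
Proof. by move=> hf hg x; apply: cvgB; [exact: hf|exact: hg]. Qed.
Lemma cM (R : realType) (f g : R -> R) : continuous f -> continuous g -> continuous (fun x => f x * g x).
Proof. by move=> hf hg x; apply: cvgM; [exact: hf|exact: hg]. Qed.
Lemma cC (R : realType) (T : topologicalType) (f : R -> T) (g : T -> R) : continuous f -> continuous g -> continuous (fun x => g (f x)).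
Proof. by move=> hf hg x; apply: (continuous_comp (hf x) (hg (f x))). Qed.

Theorem lemma1 (R : realType) (d : nat) (P : seq 'rV[R]_d)
  (Q : 'rV[R]_d -> 'rV[R]_d) (HQ : forall x, Q x \in P)
  (Hx : exists x : 'rV[R]_d, wdist Q x <> distP P x) :
  ~ (continuous (wdist Q) /\
     exists c : R, 0 < c /\
       forall y : 'rV[R]_d, `|wdist Q y - distP P y| <= c * distP P y).
Proof.
move=> [Hc [c [c0 Hrel]]]; case: Hx => x0 hx0.
have [p pP hp] := distP_att P x0 _ (HQ x0).
set a := x0 - p.
have wge : distP P x0 < wdist Q x0.
  rewrite lt_neqAle; apply/andP; split; first by apply/eqP => h; apply: hx0.
  exact: distP_le.
have dge y : 0 <= distP P y.
  by have [q _ ->] := distP_att P y _ (HQ y); exact: enorm_ge0.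
have wp0 : wdist Q p = 0.
  have dp0 : distP P p = 0.
    apply/eqP; rewrite eq_le dge andbT.
    apply: le_trans (distP_le P p p pP) _.
    by rewrite subrr /enorm big1 ?sqrtr0 // => i _; rewrite mxE expr0n.
  have := Hrel p; rewrite dp0 mulr0 subr0 normr_le0 => /eqP //.
have [m m0 Hm] := mu_ex P p.
set y := fun t : R => p + t *: a.
have key t q : 0 <= t <= 1 -> q \in P -> q != p ->
    t ^+ 2 * sq a + (1 - t) * m <= sq (y t - q).
  move=> /andP [t0 t1] qP qp.
  have -> : y t - q = t *: a + (p - q) by rewrite /y [p + _]addrC -addrA.
  rewrite sq_lin.
  have h1 : sq a <= sq (1 *: a + (p - q)).
    rewrite scale1r -!enorm_sq.
    have -> : a + (p - q) = x0 - q by rewrite /a addrA subrK.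
    rewrite lerXn2r ?nnegrE ?enorm_ge0 //.
    by rewrite -hp; exact: distP_le.
  rewrite sq_lin expr1n mul1r mulr1 in h1.
  have h2 := Hm q qP qp.
  have h3 : 0 <= t * (2 * dot a (p - q) + sq (p - q)) by apply: mulr_ge0 => //; lra.
  have h4 : 0 <= (1 - t) * (sq (p - q) - m) by apply: mulr_ge0; lra.
  nra.
set k := fun t : R => wdist Q (y t) ^+ 2 - t ^+ 2 * sq a - (1 - t) * (m / 2).
have y0 : y 0 = p by rewrite /y scale0r addr0.
have y1 : y 1 = x0 by rewrite /y scale1r /a addrC subrK.
have k0 : k 0 < 0 by rewrite /k y0 wp0; lra.
have k1 : 0 < k 1.
  rewrite /k y1 -enorm_sq -hp subrr mul0r subr0 expr1n mul1r subr_gt0.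
  by rewrite ltrXn2r ?nnegrE ?dge //; apply: le_trans (ltW wge).
have kc : continuous k.
  apply: cB; last by apply: cM; [apply: cB; [exact: cst_continuous|by move=> ?; exact: cvg_id]|exact: cst_continuous].
  apply: cB; last by apply: cM; [exact: exprn_continuous|exact: cst_continuous].
  apply: (@cC _ _ (fun t => wdist Q (y t)) (fun x : R => x ^+ 2)); last exact: exprn_continuous.
  apply: (@cC _ _ y (wdist Q)) => //.
  move=> t; apply: cvgD; first exact: cvg_cst.
  by apply: cvgZr_tmp; exact: cvg_id.

have [t t01 kt] : exists2 t, t \in `[0, 1] & k t = 0.
  apply: IVT => //; first exact: continuous_subspaceT.
  by rewrite ge_min le_max (ltW k0) (ltW k1) orbT.
move: t01; rewrite in_itv /= => /andP [t0 t1].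
have [t1e|tlt1] := eqVneq t 1; first by move: k1; rewrite -t1e kt ltxx.
have tl : t < 1 by rewrite lt_neqAle tlt1.
move: kt; rewrite /k /wdist -/(y t) enorm_sq.
have qP := HQ (y t).
have [qp|qp] := eqVneq (Q (y t)) p.
  rewrite qp /y [p + _]addrC addrK sq_scale => h.
  have : 0 < (1 - t) * (m / 2) by apply: mulr_gt0; [lra | rewrite divr_gt0].
  lra.
have := key t _ (introT andP (conj t0 t1)) qP qp => hk h.
have : 0 < (1 - t) * m by apply: mulr_gt0 => //; lra.
nra.
Qed.
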